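(* Let $A=[a_1\ \cdots\ a_m]^T\in\mathbb{R}^{m\times n}$ and $b=(b_1,\dots,b_m)^T\in\mathbb{R}^m$, let $c_i(x)=a_i^Tx-b_i$, $D(x)=\mathrm{diag}(c_1(x),\dots,c_m(x))$, and let $C(x)=\begin{bmatrix}A^T\\ D(x)\end{bmatrix}\in\mathbb{R}[x]^{(n+m)\times m}$. Then the linear function $Ax-b$ is nonsingular if and only if there exists a matrix polynomial $L(x)\in\mathbb{R}[x]^{m\times(n+m)}$ with $L(x)C(x)=I_m$. Moreover, when $Ax-b$ is nonsingular, $L(x)$ can be chosen with $\deg(L)\le m-\mathrm{rank}\,A$.
   Context: The linear function $Ax-b$ is called nonsingular if $\mathrm{rank}\,C(u)=m$ for all $u\in\mathbb{C}^n$ (equivalently, for every $u\in\mathbb{C}^n$, the vectors $a_i$ with $c_i(u)=0$ are linearly independent). $\deg(L)$ is the maximum degree of the entries of $L$; $I_m$ is the $m\times m$ identity matrix. *)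

(* Defs.v *)
From HB Require Import structures.
From mathcomp Require Import all_boot all_order all_algebra.
From mathcomp Require Import reals.
From mathcomp Require Import complex.
From mathcomp Require Import mpoly.
Set Implicit Arguments. Unset Strict Implicit. Unset Printing Implicit Defensive.
Import Order.TTheory GRing.Theory Num.Theory.
Local Open Scope ring_scope.

Definition toC (R : realType) (r : R) : complex R := (r%:C)%C.

Definition cvec (R : realType) (m n : nat) (A : 'M[R]_(m, n)) (b : 'cV[R]_m)
  (u : 'cV[complex R]_n) : 'rV[complex R]_m :=
  \row_i ((map_mx (@toC R) A *m u) i 0 - toC (b i 0)).

Definition Cmat_at (R : realType) (m n : nat) (A : 'M[R]_(m, n)) (b : 'cV[R]_m)
  (u : 'cV[complex R]_n) : 'M[complex R]_(n + m, m) :=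
  col_mx (map_mx (@toC R) A^T) (diag_mx (cvec A b u)).

Definition nonsingular (R : realType) (m n : nat) (A : 'M[R]_(m, n)) (b : 'cV[R]_m) : Prop :=
  forall u : 'cV[complex R]_n, \rank (Cmat_at A b u) = m.

Definition cpoly (R : realType) (m n : nat) (A : 'M[R]_(m, n)) (b : 'cV[R]_m) (i : 'I_m)
  : {mpoly R[n]} :=
  \sum_(j < n) A i j *: 'X_j - (b i 0)%:MP.

Definition Cpolymat (R : realType) (m n : nat) (A : 'M[R]_(m, n)) (b : 'cV[R]_m)
  : 'M[{mpoly R[n]}]_(n + m, m) :=
  col_mx (map_mx (fun a : R => a%:MP) A^T) (diag_mx (\row_i cpoly A b i)).

(* deg(L) <= d : every entry has total degree <= d (msize p = 1 + deg p, 0 for p = 0) *)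
Definition mxdeg_le (R : realType) (n p q : nat) (L : 'M[{mpoly R[n]}]_(p, q)) (d : nat) : Prop :=
  forall i j, (msize (L i j) <= d.+1)%N.

(* Main.v *)
Require Import Defs.
From HB Require Import structures.
From mathcomp Require Import all_boot all_order all_algebra.
From mathcomp Require Import reals complex mpoly.
From Stdlib Require Import Classical.
From mathcomp Require Import ring zify.
Set Implicit Arguments. Unset Strict Implicit. Unset Printing Implicit Defensive.
Import Order.TTheory GRing.Theory Num.Theory.
Local Open Scope ring_scope.

Section Deg.
Variable (R : realType) (n : nat).
Definition dle (p : {mpoly R[n]}) (d : nat) := (msize p <= d.+1)%N.

Lemma dle0 d : dle 0 d.
Proof. by rewrite /dle msize0. Qed.
Lemma dleC c d : dle c%:MP d.
Proof. by rewrite /dle msizeC; case: (c != 0). Qed.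
Lemma dleW p d d' : (d <= d')%N -> dle p d -> dle p d'.
Proof. by rewrite /dle => h1 h2; apply: leq_trans h2 _. Qed.
Lemma dleD p q d : dle p d -> dle q d -> dle (p + q) d.
Proof. rewrite /dle => h1 h2; apply: leq_trans (msizeD_le _ _) _; by rewrite geq_max h1 h2. Qed.
Lemma dleN p d : dle p d -> dle (- p) d.
Proof. by rewrite /dle msizeN. Qed.
Lemma dleB p q d : dle p d -> dle q d -> dle (p - q) d.
Proof. by move=> h1 h2; apply: dleD => //; apply: dleN. Qed.
Lemma dle_sum (I : finType) (F : I -> {mpoly R[n]}) d : (forall i, dle (F i) d) -> dle (\sum_i F i) d.
Proof. move=> h; elim/big_rec: _ => [|i x _ hx]; [exact: dle0 | exact: dleD]. Qed.
Lemma dleM p q d1 d2 : dle p d1 -> dle q d2 -> dle (p * q) (d1 + d2).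
Proof.
rewrite /dle.
have [->|nzp] := eqVneq p 0; first by rewrite mul0r msize0.
have [->|nzq] := eqVneq q 0; first by rewrite mulr0 msize0.
rewrite msizeM // => h1 h2.
have := leq_add h1 h2; rewrite addSn addnS => h.
have hp : (0 < msize p)%N by rewrite lt0n; move: nzp; apply: contra; rewrite (msize_poly_eq0 p).
by rewrite -ltnS (leq_trans _ h) // prednK // addn_gt0 hp.
Qed.
Lemma dleX (j : 'I_n) : dle 'X_j 1.
Proof. by rewrite /dle msizeX mdeg1. Qed.
Lemma dleZ c p d : dle p d -> dle (c *: p) d.
Proof. by rewrite /dle => h; apply: leq_trans (msizeZ_le _ _) h. Qed.
End Deg.

Section Main.
Variables (R : realType) (m n : nat) (A : 'M[R]_(m, n)) (b : 'cV[R]_m).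

Definition MS (S : {set 'I_m}) : 'M[R]_(m, n) := \matrix_(j, l) (if j \in S then A j l else 0).
Definition dep (S : {set 'I_m}) (mu : 'I_m -> R) :=
  (forall l, \sum_j mu j * A j l = 0) /\ (forall j, j \notin S -> mu j = 0).

Lemma fredholm S (beta : 'I_m -> R) :
  (forall mu, dep S mu -> \sum_j mu j * beta j = 0) ->
  exists u : 'I_n -> R, forall j, j \in S -> \sum_l A j l * u l = beta j.
Proof.
move=> H.
pose bS : 'rV[R]_m := \row_j (if j \in S then beta j else 0).
have : (bS <= (MS S)^T)%MS.
  rewrite submxE; move: (mulmx_coker (MS S)^T); move: (cokermx (MS S)^T) => K hK.
  apply/eqP/matrixP => i c; rewrite !mxE.
  pose mu j := if j \in S then K j c else 0.
  have dmu : dep S mu.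
    split; last by move=> j /negbTE; rewrite /mu => ->.
    move=> l; transitivity (((MS S)^T *m K) l c); last by rewrite hK mxE.
    rewrite mxE; apply: eq_bigr => j _; rewrite !mxE /mu.
    by case: (j \in S); rewrite ?mul0r // mulrC.
  transitivity (\sum_j mu j * beta j); last exact: H.
  apply: eq_bigr => j _; rewrite !mxE /mu.
  by case: (j \in S); rewrite ?mul0r // mulrC.
case/submxP => w hw; exists (fun l => w 0 l) => j jS.
move/matrixP: hw => /(_ 0 j); rewrite !mxE jS => ->.
by apply: eq_bigr => l _; rewrite !mxE jS mulrC.
Qed.

Lemma rank_MS_le S : (\rank (MS S) <= #|S|)%N.
Proof.
pose P : 'M[R]_(m, #|S|) := \matrix_(j, t) ((j == enum_val t)%:R).
pose Q : 'M[R]_(#|S|, n) := \matrix_(t, l) A (enum_val t) l.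
have -> : MS S = P *m Q.
  apply/matrixP => j l; rewrite !mxE.
  case: (boolP (j \in S)) => jS.
    rewrite (bigD1 (enum_rank_in jS j)) //= big1 ?addr0.
      by rewrite !mxE enum_rankK_in // eqxx mul1r.
    move=> t ht; rewrite !mxE; case: eqP => [ej|]; last by rewrite mul0r.
    exfalso; move/negP: ht; apply; apply/eqP/enum_val_inj; by rewrite enum_rankK_in // ej.
  rewrite big1 // => t _; rewrite !mxE; case: eqP => [ej|]; last by rewrite mul0r.
  by move: jS; rewrite ej enum_valP.
by apply: leq_trans (mxrankM_maxl _ _) (rank_leq_col _).
Qed.

Lemma MS_setT : MS setT = A.
Proof. by apply/matrixP => j l; rewrite mxE in_setT. Qed.

Lemma rank_MS_D1 S k (mu : 'I_m -> R) : dep S mu -> mu k != 0 ->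
  \rank (MS (S :\ k)) = \rank (MS S).
Proof.
move=> [hA hS] muk.
have kS : k \in S by apply: contraR muk => /hS ->.
apply/eqP; rewrite eqn_leq; apply/andP; split.
  pose D2 : 'M[R]_m := \matrix_(j, j') (((j == j') && (j != k))%:R).
  have -> : MS (S :\ k) = D2 *m MS S.
    apply/matrixP => j l; rewrite !mxE (bigD1 j) //= big1 ?addr0.
      by rewrite !mxE eqxx /= in_setD1; case: (j != k); case: (j \in S); rewrite ?mul1r ?mul0r.
    by move=> j' hj; rewrite !mxE eq_sym (negbTE hj) mul0r.
  exact: mxrankM_maxr.
pose D1 : 'M[R]_m := \matrix_(j, j') (if j == k then - (mu j' / mu k) else (j == j')%:R).
have -> : MS S = D1 *m MS (S :\ k).
  apply/matrixP => j l; rewrite !mxE.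
  case: (eqVneq j k) => [->|jk].
    rewrite kS (bigD1 k) //= !mxE setD11 mulr0 add0r.
    have := hA l; rewrite (bigD1 k) //= => /eqP; rewrite addrC addr_eq0 => /eqP e.
    symmetry; transitivity (- (mu k)^-1 * \sum_(i < m | i != k) mu i * A i l).
      rewrite mulr_sumr; apply: eq_bigr => i ik; rewrite !mxE in_setD1 ik /=.
      case: (boolP (i \in S)) => iS; first by rewrite eqxx; ring.
      by rewrite (hS _ iS) !(mul0r, mulr0, oppr0).
    by rewrite e mulrN mulNr opprK mulrA mulVf // mul1r.
  rewrite (bigD1 j) //= big1 ?addr0.
    by rewrite !mxE (negbTE jk) eqxx in_setD1 jk mul1r.
  by move=> j' hj; rewrite !mxE (negbTE jk) eq_sym (negbTE hj) mul0r.
exact: mxrankM_maxr.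
Qed.

Lemma toC0 : toC (0 : R) = 0. Proof. exact: (rmorph0 (real_complex R)). Qed.
Lemma toCM (x y : R) : toC (x * y) = toC x * toC y. Proof. exact: (rmorphM (real_complex R)). Qed.
Lemma toCB (x y : R) : toC (x - y) = toC x - toC y. Proof. exact: (rmorphB (real_complex R)). Qed.
Lemma toC_sum (I : finType) (F : I -> R) : toC (\sum_i F i) = \sum_i toC (F i).
Proof. exact: (rmorph_sum (real_complex R)). Qed.
Lemma toC_inj : injective (@toC R). Proof. exact: complexI. Qed.

Lemma NS_of (Hns : nonsingular A b) (u : 'I_n -> R) (mu : 'I_m -> R) :
  (forall l, \sum_j mu j * A j l = 0) ->
  (forall j, mu j != 0 -> \sum_l A j l * u l = b j 0) -> forall j, mu j = 0.
Proof.
move=> hA hu.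
pose U : 'cV[complex R]_n := \col_l toC (u l).
have /row_fullP [B hB] : row_full (Cmat_at A b U) by rewrite /row_full Hns.
pose v : 'cV[complex R]_m := \col_j toC (mu j).
have hv : Cmat_at A b U *m v = 0.
  rewrite /Cmat_at mul_col_mx mul_diag_mx -col_mx0; congr col_mx; apply/matrixP => i c; rewrite !mxE.
    transitivity (toC (\sum_j mu j * A j i)); last by rewrite hA toC0.
    rewrite toC_sum; apply: eq_bigr => j _; rewrite !mxE -toCM mulrC //.
  have [->|nz] := eqVneq (mu i) 0; first by rewrite toC0 mulr0.
  rewrite (_ : _ - _ = 0) ?mul0r //.
  rewrite -(hu _ nz) toC_sum; apply/eqP; rewrite subr_eq0; apply/eqP.
  by apply: eq_bigr => l _; rewrite !mxE toCM.
have : v = 0 by rewrite -[v]mul1mx -hB -mulmxA hv mulmx0.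
move=> /matrixP h j; move: (h j 0); rewrite !mxE -toC0.
exact: toC_inj.
Qed.

Lemma dle_cp k : dle (cpoly A b k) 1.
Proof.
apply: dleB; first by apply: dle_sum => l; apply: dleZ; apply: dleX.
by apply: (@dleW _ _ _ 0); [|apply: dleC].
Qed.

Lemma dle_nat (k : nat) d : dle (k%:R : {mpoly R[n]}) d.
Proof. by rewrite -mpolyC_nat; apply: dleC. Qed.

Lemma sum_wc (mu : 'I_m -> R) : (forall l, \sum_j mu j * A j l = 0) ->
  \sum_j mu j * b j 0 != 0 ->
  \sum_j (- (mu j / \sum_j mu j * b j 0))%:MP * cpoly A b j = 1.
Proof.
move=> hA; set beta := \sum_j mu j * b j 0 => hb.
under eq_bigr => j _ do rewrite /cpoly mulrBr mulr_sumr.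
rewrite sumrB exchange_big /=.
rewrite big1 ?sub0r => [|l _]; last first.
  under eq_bigr => j _ do rewrite mul_mpolyC scalerA.
  rewrite -scaler_suml.
  suff -> : \sum_i - (mu i / beta) * A i l = 0 by rewrite scale0r.
  under eq_bigr => j _ do rewrite mulNr mulrAC.
  by rewrite sumrN -mulr_suml hA mul0r oppr0.
under eq_bigr => j _ do rewrite -mpolyCM.
rewrite -raddf_sum -raddfN /= -mpolyC1; congr mpolyC.
under eq_bigr => j _ do rewrite mulNr mulrAC.
by rewrite sumrN -mulr_suml -/beta mulfV // opprK.
Qed.

Lemma main (Hns : nonsingular A b) N : forall S : {set 'I_m}, (#|S| <= N)%N ->
  forall i, i \in S ->
  exists (p : 'I_n -> {mpoly R[n]}) (q : 'I_m -> {mpoly R[n]}),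
   [/\ forall j, j \in S -> \sum_l p l * (A j l)%:MP + q j * cpoly A b j = (i == j)%:R,
       forall l, dle (p l) (#|S| - \rank (MS S)) &
       forall j, dle (q j) (#|S| - \rank (MS S))].
Proof.
elim: N => [|N IH] S hS i iS.
  have : (0 < #|S|)%N by apply/card_gt0P; exists i.
  by rewrite lt0n -leqn0 hS.
case: (classic (exists mu, dep S mu /\ \sum_j mu j * b j 0 != 0)) => [[mu [dm hbeta]]|hno].
  set d := (#|S| - \rank (MS S))%N.
  have hk : forall k, exists pq : ('I_n -> {mpoly R[n]}) * ('I_m -> {mpoly R[n]}),
     [/\ mu k != 0 -> forall j, j \in S ->
           \sum_l pq.1 l * (A j l)%:MP + pq.2 j * cpoly A b j = (i == j)%:R * cpoly A b k,
         forall l, dle (pq.1 l) d & forall j, dle (pq.2 j) d].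
    move=> k; case: (eqVneq (mu k) 0) => [mk|muk].
      exists (fun _ => 0, fun _ => 0); split => [|l|j]; [by [] | exact: dle0 | exact: dle0].
    have kS : k \in S by apply: contraR muk => /dm.2 ->.
    case: (eqVneq k i) => [ki|ki].
      exists (fun _ => 0, fun j => (j == i)%:R); split => /=.
      - move=> _ j jS; rewrite big1 ?add0r => [|l _]; last by rewrite mul0r.
        case: (eqVneq j i) => [->|ji]; first by rewrite ki.
        by rewrite !mul0r.
      - by move=> l; apply: dle0.
      - by move=> j; apply: dle_nat.
    have hcard : #|S| = (#|S :\ k|).+1 by rewrite (cardsD1 k S) kS.
    have hS' : (#|S :\ k| <= N)%N by rewrite -ltnS -hcard.
    have iS' : i \in S :\ k by rewrite in_setD1 eq_sym ki.
    have [p' [q' [heq hp hq]]] := IH _ hS' i iS'.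
    have hr := rank_MS_D1 dm muk.
    have hr2 := rank_MS_le (S :\ k).
    have hdd : (1 + (#|S :\ k| - \rank (MS (S :\ k))) <= d)%N.
      by rewrite /d hcard -hr; lia.
    exists (fun l => cpoly A b k * p' l,
            fun j => if j == k then - \sum_l p' l * (A k l)%:MP else cpoly A b k * q' j).
    split => /=.
    - move=> _ j jS; case: (eqVneq j k) => [->|jk].
        rewrite eq_sym (negbTE ki) mul0r.
        under eq_bigr => l _ do rewrite -mulrA.
        by rewrite -mulr_sumr mulNr mulrC subrr.
      have jS' : j \in S :\ k by rewrite in_setD1 jk.
      rewrite -(heq j jS') [RHS]mulrC [RHS]mulrDr mulr_sumr; congr (_ + _).
        by apply: eq_bigr => l _; rewrite mulrA.
      by rewrite mulrA.
    - move=> l. apply: (dleW hdd). apply: dleM => //; exact: dle_cp.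
    - move=> j; case: eqP => _.
        apply: dleN; apply: dle_sum => l; apply: (@dleW _ _ _ ((#|S :\ k| - \rank (MS (S :\ k))) + 0)%N).
          by rewrite addn0; apply: leq_trans hdd; rewrite leq_addl.
        by apply: dleM => //; apply: dleC.
      apply: (dleW hdd); apply: dleM => //; exact: dle_cp.
  have [f hf] := fin_all_exists hk.
  set beta := \sum_j mu j * b j 0.
  pose w (k : 'I_m) : {mpoly R[n]} := (- (mu k / beta))%:MP.
  exists (fun l => \sum_k w k * (f k).1 l), (fun j => \sum_k w k * (f k).2 j); split.
  - move=> j jS.
    transitivity (\sum_k w k * ((i == j)%:R * cpoly A b k)); last first.
      under eq_bigr => k _ do rewrite mulrCA.
      by rewrite -mulr_sumr /w (sum_wc dm.1 hbeta) mulr1.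
    under eq_bigr => l _ do rewrite mulr_suml.
    rewrite exchange_big /= mulr_suml -big_split /=; apply: eq_bigr => k _.
    case: (eqVneq (mu k) 0) => [mk|mk].
      by rewrite /w mk mul0r oppr0 mpolyC0 !mul0r big1 ?add0r // => l _; rewrite !mul0r.
    have [e1 _ _] := hf k; rewrite -(e1 mk j jS) [RHS]mulrDr; congr (_ + _); last by rewrite mulrA.
    by rewrite mulr_sumr; apply: eq_bigr => l _; rewrite mulrA.
  - move=> l; apply: dle_sum => k; rewrite -[d]add0n; apply: dleM; first exact: dleC.
    by have [_ h _] := hf k; apply: h.
  - move=> j; apply: dle_sum => k; rewrite -[d]add0n; apply: dleM; first exact: dleC.
    by have [_ _ h] := hf k; apply: h.
have hb : forall mu, dep S mu -> \sum_j mu j * b j 0 = 0.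
  move=> mu dm; case: (eqVneq (\sum_j mu j * b j 0) 0) => // h.
  by exfalso; apply: hno; exists mu.
have [u hu] := fredholm hb.
have h0 : forall mu, dep S mu -> forall j, mu j = 0.
  move=> mu [hA hS0]; apply: (NS_of Hns (u := u)) => // j nz; apply: hu.
  by apply: contraR nz => /hS0 ->.
have hd : forall mu, dep S mu -> \sum_j mu j * (i == j)%:R = 0 :> R.
  by move=> mu dm; apply: big1 => j _; rewrite (h0 _ dm) mul0r.
have [v hv] := fredholm hd.
exists (fun l => (v l)%:MP), (fun _ => 0); split.
- move=> j jS; rewrite mul0r addr0 -mpolyC_nat -(hv j jS) raddf_sum.
  by apply: eq_bigr => l _; rewrite -mpolyCM mulrC.
- by move=> l; apply: dleC.
- by move=> j; apply: dle0.
Qed.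

Lemma eval_ns (L : 'M[{mpoly R[n]}]_(m, n + m)) : L *m Cpolymat A b = 1%:M -> nonsingular A b.
Proof.
move=> hL u.
pose ev := mmap (real_complex R) (fun l => u l 0).
have hC : map_mx ev (Cpolymat A b) = Cmat_at A b u.
  rewrite /Cpolymat /Cmat_at map_col_mx map_diag_mx; congr col_mx.
    by apply/matrixP => l j; rewrite !mxE /ev mmapC.
  congr diag_mx; apply/matrixP => z j; rewrite !mxE /cpoly /ev rmorphB /= mmapC.
  rewrite rmorph_sum /=; congr (_ - _); apply: eq_bigr => l _.
  by rewrite mmapZ mmapX mmap1U !mxE.
have : map_mx ev L *m Cmat_at A b u = 1%:M by rewrite -hC -map_mxM hL map_mx1.
move=> h; apply/eqP; rewrite -/(row_full _); apply/row_fullP; by exists (map_mx ev L).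
Qed.
End Main.

Lemma build (R : realType) (m n : nat) (A : 'M[R]_(m, n)) (b : 'cV[R]_m) :
  nonsingular A b ->
  exists L : 'M[{mpoly R[n]}]_(m, n + m),
    L *m Cpolymat A b = 1%:M /\ mxdeg_le L (m - \rank A).
Proof.
move=> Hns.
have hT : (#|[set: 'I_m]| <= m)%N by rewrite cardsT card_ord.
have hk : forall i : 'I_m, exists pq : ('I_n -> {mpoly R[n]}) * ('I_m -> {mpoly R[n]}),
   [/\ forall j, j \in [set: 'I_m] ->
         \sum_l pq.1 l * (A j l)%:MP + pq.2 j * cpoly A b j = (i == j)%:R,
       forall l, dle (pq.1 l) (#|[set: 'I_m]| - \rank (MS A [set: 'I_m])) &
       forall j, dle (pq.2 j) (#|[set: 'I_m]| - \rank (MS A [set: 'I_m]))].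
  move=> i; have [p [q hpq]] := main Hns hT (in_setT i).
  by exists (p, q).
have [F hF] := fin_all_exists hk.
pose P : 'M[{mpoly R[n]}]_(m, n) := \matrix_(i, l) (F i).1 l.
pose Q : 'M[{mpoly R[n]}]_(m, m) := \matrix_(i, j) (F i).2 j.
exists (row_mx P Q); split.
  rewrite /Cpolymat mul_row_col mul_mx_diag; apply/matrixP => i j; rewrite !mxE.
  have [e _ _] := hF i; rewrite -(e j (in_setT j)); congr (_ + _).
  by apply: eq_bigr => l _; rewrite !mxE.
move=> i c; rewrite mxE; have [_ h1 h2] := hF i.
rewrite cardsT card_ord MS_setT in h1 h2.
by case: (split c) => j; rewrite mxE; [apply: h1 | apply: h2].
Qed.

Unset Implicit Arguments.

Theorem proposition4p1 (R : realType) (m n : nat) (A : 'M[R]_(m, n)) (b : 'cV[R]_m) :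
  (nonsingular A b <->
     exists L : 'M[{mpoly R[n]}]_(m, n + m), L *m Cpolymat A b = 1%:M)
  /\
  (nonsingular A b ->
     exists L : 'M[{mpoly R[n]}]_(m, n + m),
       L *m Cpolymat A b = 1%:M /\ mxdeg_le L (m - \rank A)).
Proof.
split; last exact: build.
split; first by move=> /build [L [hL _]]; exists L.
by case=> L hL; apply: eval_ns hL.
Qed.
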